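(* Let $\mathbf{k}=(k_1,\ldots,k_n)$ be a sequence of positive integers. Then in $\mathfrak{h}_t^1$, $$\sum_{\sigma\in S_n}z_{k_{\sigma(1)}}\cdots z_{k_{\sigma(n)}}=\sum_{\Pi=\{P_1,\ldots,P_i\}\in\mathcal{P}_n}c_\Pi(t)\,z_{\mathbf{k},P_1}\ast_t\cdots\ast_t z_{\mathbf{k},P_i},$$ where $z_{\mathbf{k},P_j}=z_{\sum_{l\in P_j}k_l}$.
   Context: $t$ is a formal variable; $\mathfrak{h}_t=\mathbb{Q}[t]\langle x,y\rangle$ is the noncommutative polynomial algebra in letters $x,y$ ($1$ = empty word), $\mathfrak{h}^1_t=\mathbb{Q}[t]+\mathfrak{h}_ty$, $z_k=x^{k-1}y$. For a word $w$, $\delta(w)=1$ if $w=1$ and $0$ otherwise. The $t$-harmonic product $\ast_t$ on $\mathfrak{h}^1_t$ is the $\mathbb{Q}[t]$-bilinear product with $1\ast_t w=w\ast_t1=w$ and, for words $w_1,w_2\in\mathfrak{h}^1_t$ and $k,l\ge1$, $z_kw_1\ast_t z_lw_2=z_k(w_1\ast_t z_lw_2)+z_l(z_kw_1\ast_t w_2)+(1-2t)z_{k+l}(w_1\ast_t w_2)+[1-\delta(w_1)\delta(w_2)](t^2-t)x^{k+l}(w_1\ast_t w_2)$; it is commutative and associative. $S_n$ is the symmetric group, $\mathcal{P}_n$ the set of all set partitions of $\{1,\ldots,n\}$. For $m\ge1$, $c_m(t)=(m-1)!\,[t^m-(t-1)^m]$, and for $\Pi=\{P_1,\ldots,P_i\}\in\mathcal{P}_n$,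 $c_\Pi(t)=\prod_{j=1}^ic_{\#P_j}(t)$. *)

(* Defs.v *)
From mathcomp Require Import all_boot all_order all_algebra all_fingroup.
Set Implicit Arguments. Unset Strict Implicit. Unset Printing Implicit Defensive.
Import GRing.Theory.
Local Open Scope ring_scope.

(* Coefficient ring Q[t] = {poly rat}, t = 'X. *)
Notation Qt := {poly rat}.

(* Words of h^1_t written in the letters z_k: the sequence [:: k1; ...; kr]
   (all ki >= 1) stands for z_{k1} ... z_{kr}; [::] is the empty word 1. *)
Definition zword := seq nat.

(* The actual word in the letters x (false), y (true): z_k = x^(k-1) y. *)
Definition toxy (u : zword) : seq bool :=
  flatten [seq rcons (nseq k.-1 false) true | k <- u].

(* Elements of h_t are represented as formal Q[t]-linear combinations of words. *)
Definition elt := seq (Qt * zword).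

Definition coef (p : elt) (w : seq bool) : Qt :=
  \sum_(c <- p | toxy c.2 == w) c.1.

Definition scale (a : Qt) (p : elt) : elt := [seq (a * c.1, c.2) | c <- p].

Definition zmul (k : nat) (p : elt) : elt := [seq (c.1, k :: c.2) | c <- p].

(* left multiplication by x^a, on words of h^1 that are nonempty:
   x^a z_m w = z_(a+m) w.  (Only ever applied to nonempty words.) *)
Definition xpow_w (a : nat) (u : zword) : zword :=
  match u with [::] => [:: a] | m :: r => (a + m) :: r end.
Definition xmul (a : nat) (p : elt) : elt := [seq (c.1, xpow_w a c.2) | c <- p].

Fixpoint tstar_w (u v : zword) {struct u} : elt :=
  match u with
  | [::] => [:: (1, v)]
  | k :: u' =>
    let fix aux (v : zword) : elt :=
      match v with
      | [::] => [:: (1, u)]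
      | l :: v' =>
          zmul k (tstar_w u' v) ++ zmul l (aux v')
          ++ scale (1 - 2%:R * 'X) (zmul (k + l) (tstar_w u' v'))
          ++ (if (u' == [::]) && (v' == [::]) then [::]
              else scale ('X ^+ 2 - 'X) (xmul (k + l) (tstar_w u' v')))
      end in aux v
  end.

Definition tstar (p q : elt) : elt :=
  flatten [seq [seq (a.1 * b.1 * d.1, d.2) | d <- tstar_w a.2 b.2] | a <- p, b <- q].

Definition tstar_big (ps : seq elt) : elt := foldr tstar [:: (1, [::])] ps.

Definition cm (m : nat) : Qt := (m.-1)`!%:R * ('X ^+ m - ('X - 1) ^+ m).

Definition cPi (n : nat) (P : {set {set 'I_n}}) : Qt := \prod_(B in P) cm #|B|.

Definition zblock (n : nat) (k : 'I_n -> nat) (B : {set 'I_n}) : elt :=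
  [:: (1, [:: \sum_(l in B) k l]%N)].

Definition set_partitions (n : nat) : seq {set {set 'I_n}} :=
  enum [set P : {set {set 'I_n}} | partition P [set: 'I_n]].

Definition lhs (n : nat) (k : 'I_n -> nat) : elt :=
  [seq ((1 : Qt), [seq k ((s : {perm 'I_n}) i) | i <- enum 'I_n]) | s : {perm 'I_n} <- enum [set: {perm 'I_n}]].

Definition rhs (n : nat) (k : 'I_n -> nat) : elt :=
  flatten [seq scale (cPi P) (tstar_big [seq zblock k B | B <- enum P])
          | P <- set_partitions n].

(* Main.v *)
Require Import Defs.
From mathcomp Require Import all_boot all_order all_algebra all_fingroup.
From mathcomp Require Import ring zify.
From Stdlib Require Import FunctionalExtensionality.
Set Implicit Arguments. Unset Strict Implicit. Unset Printing Implicit Defensive.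
Import GRing.Theory.
Local Open Scope ring_scope.


Definition ev (f : zword -> Qt) (p : elt) : Qt := \sum_(c <- p) c.1 * f c.2.

Lemma ev_cat f p q : ev f (p ++ q) = ev f p + ev f q.
Proof. by rewrite /ev big_cat. Qed.
Lemma ev_zmul f c p : ev f (zmul c p) = ev (fun u => f (c :: u)) p.
Proof. by rewrite /ev /zmul big_map. Qed.
Lemma ev_xmul f c p : ev f (xmul c p) = ev (fun u => f (xpow_w c u)) p.
Proof. by rewrite /ev /xmul big_map. Qed.
Lemma ev_scale f a p : ev f (scale a p) = a * ev f p.
Proof. by rewrite /ev /scale big_map mulr_sumr; apply: eq_bigr => i _; rewrite mulrA. Qed.
Lemma ev1 f a u : ev f [:: (a, u)] = a * f u.
Proof. by rewrite /ev big_seq1. Qed.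
Lemma ev_nil f : ev f [::] = 0.
Proof. by rewrite /ev big_nil. Qed.

Lemma coef_ev p w : coef p w = ev (fun u => (toxy u == w)%:R) p.
Proof.
rewrite /coef /ev big_mkcond; apply: eq_bigr => c _.
by case: (toxy c.2 == w); rewrite ?mulr1 ?mulr0.
Qed.

Definition sc : Qt := 1 - 2%:R * 'X.
Definition tc : Qt := 'X ^+ 2 - 'X.

Fixpoint Phi (a : nat) (u : zword) (f : zword -> Qt) : Qt :=
  match u with
  | [::] => f [:: a]
  | l :: v => f (a :: l :: v) + Phi a v (fun w => f (l :: w)) + sc * f ((a + l)%N :: v)
      + (if v is m :: r then tc * f ((a + l + m)%N :: r) else 0)
  end.

Lemma tstar1_cons c l v : tstar_w [:: c] (l :: v) =
  zmul c [:: (1, l :: v)] ++ zmul l (tstar_w [:: c] v)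
  ++ scale sc (zmul (c + l) [:: (1, v)])
  ++ (if v == [::] then [::] else scale tc (xmul (c + l) [:: (1, v)])).
Proof. by []. Qed.

Lemma ev_tstar1 c u f : ev f (tstar_w [:: c] u) = Phi c u f.
Proof.
elim: u f => [|l v IH] f; first by rewrite /= ev1 mul1r.
rewrite tstar1_cons !ev_cat !ev_zmul IH ev_scale ev_zmul !ev1 /= !mul1r.
case: v {IH} => [|m r]. rewrite /= ev_nil. rewrite !addrA. done.
by rewrite /= ev1 mulr1 !addrA.
Qed.

Lemma Phi_add a u f g : Phi a u (fun w => f w + g w) = Phi a u f + Phi a u g.
Proof.
elim: u f g => [|l v IH] f g //=; rewrite IH.
case: v {IH} => [|m r]; rewrite ?addr0; ring.
Qed.

Lemma Phi_scale a u c f : Phi a u (fun w => c * f w) = c * Phi a u f.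
Proof.
elim: u f => [|l v IH] f //=; rewrite IH.
case: v {IH} => [|m r]; rewrite ?addr0; ring.
Qed.

Lemma Phi_ext a u f g : (forall w, f w = g w) -> Phi a u f = Phi a u g.
Proof.
elim: u f g => [|l v IH] f g e //=; rewrite !e (IH _ (fun w => g (l :: w))) //.
by case: v {IH} => [|m r]; rewrite ?e.
Qed.

Definition fx (f : zword -> Qt) (c : nat) (w : zword) : Qt :=
  if w is m :: r then f ((c + m)%N :: r) else 0.

Lemma PhiE0 a f : Phi a [::] f = f [:: a].
Proof. by []. Qed.
Lemma PhiE1 a l f : Phi a [:: l] f = f [:: a; l] + f [:: l; a] + sc * f [:: (a + l)%N].
Proof. by rewrite /= addr0. Qed.
Lemma PhiE2 a l m r f : Phi a [:: l, m & r] f = f [:: a, l, m & r]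
   + Phi a (m :: r) (fun w => f (l :: w)) + sc * f [:: (a + l)%N, m & r] + tc * f ((a + l + m)%N :: r).
Proof. by []. Qed.
Lemma PhiEc a l v f : Phi a (l :: v) f = f [:: a, l & v]
   + Phi a v (fun w => f (l :: w)) + sc * f ((a + l)%N :: v) + tc * fx f (a + l) v.
Proof. by case: v => [|m r] //=; rewrite mulr0. Qed.

Global Opaque Phi.

Lemma Phi_fx a v f c : Phi a v (fx f c) =
  f ((c + a)%N :: v) + fx (fun w => Phi a w f) c v - fx (fun w => f (a :: w)) c v.
Proof.
case: v => [|m r]; first by rewrite PhiE0 /= addr0 subr0.
rewrite PhiEc /= PhiEc.
case: r => [|p q] /=.
  rewrite !mulr0 !addr0 (_ : (c + (a + m))%N = (a + (c + m))%N); last by rewrite addnCA.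
  ring.
rewrite (_ : (c + (a + m))%N = (a + (c + m))%N); last by rewrite addnCA.
rewrite (_ : (c + (a + m + p))%N = (a + (c + m) + p)%N); last by rewrite !addnA (addnC c a).
ring.
Qed.

Lemma Phi_consE b l f : (fun w => Phi b (l :: w) f) = (fun w =>
   f [:: b, l & w] + Phi b w (fun u => f (l :: u)) + sc * f ((b + l)%N :: w) + tc * fx f (b + l) w).
Proof. by apply: functional_extensionality => w; rewrite PhiEc. Qed.

Lemma Phi_comm a b u f :
  Phi a u (fun w => Phi b w f) = Phi b u (fun w => Phi a w f).
Proof.
elim: u f => [|l v IH] f.
  rewrite !PhiE0 /= !PhiE1 (addnC a b); ring.
rewrite PhiEc [in RHS]PhiEc !Phi_consE !Phi_add !Phi_scale !Phi_fx IH.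
rewrite !PhiEc.
have e2 : (b + l + a = a + b + l)%N by lia.
have e3 : (a + l + b = a + b + l)%N by lia.
have e4 : (b + (a + l) = a + b + l)%N by lia.
have e5 : (a + (b + l) = a + b + l)%N by lia.
have e1 : (b + a = a + b)%N by lia.
case: v {IH} => [|m r] /=.
  rewrite !mulr0 !subr0 !addr0 !PhiE0 /= e2 e3 e4 e5 e1; ring.
rewrite e2 e3 e4 e5 e1; ring.
Qed.

Fixpoint Gf (cs : seq nat) (f : zword -> Qt) : Qt :=
  if cs is c :: cs' then Gf cs' (fun u => Phi c u f) else f [::].

Lemma Gf_swap a b cs f : Gf [:: a, b & cs] f = Gf [:: b, a & cs] f.
Proof.
rewrite /=; congr (Gf cs _); apply: functional_extensionality => u.
by rewrite Phi_comm.
Qed.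

Lemma Gf_mid t1 x t2 f : Gf (t1 ++ x :: t2) f = Gf (x :: t1 ++ t2) f.
Proof.
elim: t1 f => [|y t1 IH] f //=.
by rewrite IH /=; apply: (Gf_swap y x).
Qed.

Lemma Gf_perm s t f : perm_eq s t -> Gf s f = Gf t f.
Proof.
elim: s t f => [|x s IH] t f.
  by move=> p; rewrite perm_sym in p; rewrite (perm_nilP p).
move=> pst.
have xt : x \in t by rewrite -(perm_mem pst) mem_head.
case/splitPr: xt pst => t1 t2 pst.
rewrite Gf_mid /=; apply: IH.
have : perm_eq (x :: s) (x :: t1 ++ t2).
  apply: (perm_trans pst).
  by rewrite -cat1s -[x :: t1 ++ t2]cat1s perm_catCA.
by rewrite perm_cons.
Qed.

Lemma ev_flatten f ss : ev f (flatten ss) = \sum_(s <- ss) ev f s.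
Proof. by elim: ss => [|s ss IH]; rewrite ?big_nil ?big_cons /= ?ev_nil // ev_cat IH. Qed.

Lemma ev_tstar1L c q f : ev f (tstar [:: (1, [:: c])] q) = ev (fun u => Phi c u f) q.
Proof.
rewrite /tstar /= cats0 ev_flatten big_map /ev; apply: eq_bigr => b _.
rewrite big_map -ev_tstar1 /ev mulr_sumr; apply: eq_bigr => d _.
by rewrite mul1r mulrA.
Qed.

Lemma ev_tstar_big f cs :
  ev f (tstar_big [seq [:: ((1 : Qt), [:: c])] | c <- cs]) = Gf cs f.
Proof.
elim: cs f => [|c cs IH] f; first by rewrite /= ev1 mul1r.
by rewrite /= ev_tstar1L IH.
Qed.


Section LfSec.
Variable n : nat.
Implicit Types (k : 'I_n -> nat) (A C : {set 'I_n}) (f : zword -> Qt).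

Fixpoint Lfu k (m : nat) A f : Qt :=
  if m is m'.+1 then \sum_(y in A) Lfu k m' (A :\ y) (fun u => f (k y :: u)) else f [::].
Definition Lf k A f := Lfu k #|A| A f.

Lemma Lf0 k f : Lf k set0 f = f [::].
Proof. by rewrite /Lf cards0. Qed.

Lemma LfE k A f : A != set0 ->
  Lf k A f = \sum_(y in A) Lf k (A :\ y) (fun u => f (k y :: u)).
Proof.
move=> A0; rewrite /Lf.
have [y yA] := set0Pn _ A0.
have cA : #|A| = #|A :\ y|.+1 by rewrite (cardsD1 y A) yA.
rewrite cA /=; apply: eq_bigr => z zA.
have -> : #|A :\ z| = #|A :\ y|.
  by apply/eqP; rewrite -eqSS -cA (cardsD1 z A) zA.
by [].
Qed.

Lemma Lfu_add k m A f g : Lfu k m A (fun u => f u + g u) = Lfu k m A f + Lfu k m A g.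
Proof.
elim: m A f g => [|m IH] A f g //=; rewrite -big_split /=.
by apply: eq_bigr => y _; rewrite IH.
Qed.
Lemma Lf_add k A f g : Lf k A (fun u => f u + g u) = Lf k A f + Lf k A g.
Proof. exact: Lfu_add. Qed.

Lemma Lfu_scale k m A c f : Lfu k m A (fun u => c * f u) = c * Lfu k m A f.
Proof.
elim: m A f => [|m IH] A f //=; rewrite mulr_sumr.
by apply: eq_bigr => y _; rewrite IH.
Qed.
Lemma Lf_scale k A c f : Lf k A (fun u => c * f u) = c * Lf k A f.
Proof. exact: Lfu_scale. Qed.

Lemma Lf_fx k A f c : Lf k A (fx f c) =
  \sum_(i in A) Lf k (A :\ i) (fun u => f ((c + k i)%N :: u)).
Proof.
have [->|A0] := eqVneq A set0; first by rewrite Lf0 big_set0.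
by rewrite LfE.
Qed.

Lemma Lfu_congr k k' m A f : {in A, k =1 k'} -> Lfu k m A f = Lfu k' m A f.
Proof.
elim: m A f => [|m IH] A f e //=; apply: eq_bigr => y yA.
rewrite e //; apply: IH => z; rewrite inE => /andP[_ zA]; exact: e.
Qed.
Lemma Lf_congr k k' A f : {in A, k =1 k'} -> Lf k A f = Lf k' A f.
Proof. exact: Lfu_congr. Qed.

End LfSec.

Section Exch.
Variable n : nat.
Implicit Types (C : {set 'I_n}).

Lemma setD1C C x y : C :\ x :\ y = C :\ y :\ x.
Proof. by apply/setP => z; rewrite !inE andbCA. Qed.

Lemma if_sum (b : bool) (F : 'I_n -> Qt) :
  (if b then \sum_j F j else 0) = \sum_j (if b then F j else 0).
Proof. by case: b => //; rewrite big1. Qed.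

Lemma exch2 C (F : 'I_n -> 'I_n -> Qt) :
  \sum_(i in C) \sum_(j in C :\ i) F i j = \sum_(j in C) \sum_(i in C :\ j) F i j.
Proof.
rewrite big_mkcond [RHS]big_mkcond.
under eq_bigr => i _ do rewrite big_mkcond if_sum.
under [RHS]eq_bigr => i _ do rewrite big_mkcond if_sum.
rewrite exchange_big; apply: eq_bigr => j _; apply: eq_bigr => i _.
rewrite !inE (eq_sym i j).
by case: (i \in C); case: (j \in C); case: (j == i).
Qed.

Lemma exch3 C (H : 'I_n -> 'I_n -> 'I_n -> Qt) :
  \sum_(i in C) \sum_(i' in C :\ i) \sum_(y in C :\ i' :\ i) H i i' y =
  \sum_(y in C) \sum_(i in C :\ y) \sum_(i' in C :\ y :\ i) H i i' y.
Proof.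
rewrite big_mkcond [RHS]big_mkcond.
under eq_bigr => i _ do rewrite big_mkcond if_sum.
under eq_bigr => i _ do under eq_bigr => i' _ do rewrite big_mkcond if_sum if_sum.
under [RHS]eq_bigr => i _ do rewrite big_mkcond if_sum.
under [RHS]eq_bigr => i _ do under eq_bigr => i' _ do rewrite big_mkcond if_sum if_sum.
rewrite [RHS]exchange_big.
under [RHS]eq_bigr => i _ do rewrite exchange_big.
apply: eq_bigr => i _; apply: eq_bigr => i' _; apply: eq_bigr => y _.
rewrite !inE (eq_sym i y) (eq_sym i' y).
by case: (i \in C); case: (i' \in C); case: (y \in C); case: (i' == i); case: (y == i); case: (y == i').
Qed.
End Exch.

Definition kup n (k : 'I_n -> nat) (i : 'I_n) (c : nat) : 'I_n -> nat :=
  fun j => if j == i then (k j + c)%N else k j.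

Lemma kup_neq n (k : 'I_n -> nat) i c j : j != i -> kup k i c j = k j.
Proof. by rewrite /kup => /negbTE ->. Qed.
Lemma kup_eq n (k : 'I_n -> nat) i c : kup k i c i = (k i + c)%N.
Proof. by rewrite /kup eqxx. Qed.

Lemma Lf_kup n (k : 'I_n -> nat) i c (A : {set 'I_n}) f : i \notin A -> Lf (kup k i c) A f = Lf k A f.
Proof.
move=> iA; apply: Lf_congr => j jA; apply: kup_neq.
by apply: contraNneq iA => <-.
Qed.

Lemma notin_D1 n (C : {set 'I_n}) i : i \notin C :\ i.
Proof. by rewrite !inE eqxx. Qed.

Lemma cardD1S n (A : {set 'I_n}) x : x \in A -> #|A| = (#|A :\ x|).+1.
Proof. by move=> xA; rewrite (cardsD1 x A) xA add1n. Qed.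

Lemma Sx n (k : 'I_n -> nat) (x : 'I_n) : forall m (A : {set 'I_n}) f, #|A| = m.+1 -> x \in A ->
  Lf k (A :\ x) (fun u => Phi (k x) u f) = Lf k A f
  + sc * \sum_(i in A :\ x) Lf (kup k i (k x)) (A :\ x) f
  + tc * \sum_(i in A :\ x) \sum_(i' in A :\ x :\ i) Lf (kup k i (k x + k i')) (A :\ x :\ i') f.
Proof.
elim => [|m IH] A f cA xA.
  have C0 : A :\ x = set0.
    by apply/eqP; rewrite -cards_eq0; move: cA; rewrite (cardD1S xA) => -[] ->.
  rewrite C0 !big_set0 !mulr0 !addr0 Lf0 PhiE0.
  rewrite LfE; last by apply/set0Pn; exists x.
  rewrite -(setD1K xA) C0 setU0 big_set1 setDv Lf0 //.
set C := A :\ x.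
have cC : #|C| = m.+1 by move: cA; rewrite (cardD1S xA) => -[].
have C0 : C != set0 by rewrite -card_gt0 cC.
have L1 : \sum_(y in C) Lf k (C :\ y) (fun w => f [:: k x, k y & w]) = Lf k C (fun u => f (k x :: u)).
  by rewrite [RHS]LfE.
have R0 : Lf k A f = Lf k C (fun u => f (k x :: u)) + \sum_(y in C) Lf k (A :\ y) (fun u => f (k y :: u)).
  by rewrite LfE ?(big_setD1 x xA) //; apply/set0Pn; exists x.
have L2 : forall y, y \in C -> Lf k (C :\ y) (fun w => Phi (k x) w (fun u => f (k y :: u))) =
   Lf k (A :\ y) (fun u => f (k y :: u))
   + sc * \sum_(i in C :\ y) Lf (kup k i (k x)) (C :\ y) (fun u => f (k y :: u))
   + tc * \sum_(i in C :\ y) \sum_(i' in C :\ y :\ i) Lf (kup k i (k x + k i')) (C :\ y :\ i') (fun u => f (k y :: u)).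
  move=> y yC.
  have xAy : x \in A :\ y by rewrite !inE xA andbT; move: yC; rewrite !inE eq_sym => /andP[].
  have cAy : #|A :\ y| = m.+1.
    by move: cA; move: yC; rewrite !inE => /andP[_ yA]; rewrite (cardD1S yA) => -[].
  by rewrite /C setD1C IH.
clearbody C.
have S1 : \sum_(i in C) Lf (kup k i (k x)) C f =
   \sum_(i in C) Lf k (C :\ i) (fun u => f ((k x + k i)%N :: u))
   + \sum_(y in C) \sum_(i in C :\ y) Lf (kup k i (k x)) (C :\ y) (fun u => f (k y :: u)).
  rewrite -exch2 -big_split; apply: eq_bigr => i iC /=.
  rewrite LfE // (big_setD1 i iC) /= kup_eq Lf_kup ?notin_D1 // addnC; congr (_ + _).
  by apply: eq_bigr => y; rewrite !inE => /andP[yi _]; rewrite (kup_neq _ _ yi).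
have T1 : \sum_(i in C) \sum_(i' in C :\ i) Lf (kup k i (k x + k i')) (C :\ i') f =
   \sum_(i in C) \sum_(i' in C :\ i) Lf k (C :\ i :\ i') (fun u => f ((k x + k i + k i')%N :: u))
   + \sum_(y in C) \sum_(i in C :\ y) \sum_(i' in C :\ y :\ i) Lf (kup k i (k x + k i')) (C :\ y :\ i') (fun u => f (k y :: u)).
  rewrite -exch3 -big_split; apply: eq_bigr => i iC /=.
  rewrite -big_split; apply: eq_bigr => i' /= i'C.
  have iC' : i \in C :\ i'.
    by move: i'C; rewrite !inE iC andbT => /andP[h _]; rewrite eq_sym.
  rewrite LfE; last by apply/set0Pn; exists i.
  rewrite (big_setD1 i iC') /= kup_eq Lf_kup ?notin_D1 // setD1C; congr (_ + _).
    by rewrite addnA (addnC (k i)).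
  apply: eq_bigr => y; rewrite !inE => /andP[h1 /andP[h2 _]].
  by rewrite (@kup_neq _ k i _ y) 1?setD1C //; move: h1 h2; rewrite eq_sym.
rewrite LfE //.
under eq_bigr => y _ do rewrite Phi_consE !Lf_add !Lf_scale Lf_fx.
rewrite !big_split /= L1 (eq_bigr _ L2) !big_split /= R0 S1 T1 -!mulr_sumr.
ring.
Qed.


Section RSec.
Variable n : nat.
Implicit Types (k : 'I_n -> nat) (A B D : {set 'I_n}) (f : zword -> Qt) (P Q : {set {set 'I_n}}).

Definition bsum k B : nat := (\sum_(l in B) k l)%N.

Definition Rf k A f : Qt :=
  \sum_(P | partition P A) cPi P * Gf [seq bsum k B | B <- enum P] f.

Lemma Rf0 k f : Rf k set0 f = f [::].
Proof.
rewrite /Rf (eq_bigl (fun P => P == set0)); last by move=> P; rewrite partition_set0.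
by rewrite big_pred1_eq /cPi big_set0 enum_set0 mul1r.
Qed.

Lemma Rf_congr k k' A f : {in A, k =1 k'} -> Rf k A f = Rf k' A f.
Proof.
move=> e; apply: eq_bigr => P pP; congr (_ * Gf _ f).
apply/eq_in_map => B; rewrite mem_enum => BP.
apply: eq_bigr => l lB; apply: e.
by move/subsetP: (partitionS pP BP); apply.
Qed.

Lemma enum_setU1_perm (X : {set 'I_n}) P : X \notin P -> perm_eq (enum (X |: P)) (X :: enum P).
Proof.
move=> XP; apply: uniq_perm; rewrite ?enum_uniq //=.
  by rewrite mem_enum XP enum_uniq.
by move=> Y; rewrite in_cons !mem_enum in_setU1.
Qed.

Lemma cond_fwd A x P B Q : x \in A -> partition P A ->
  pblock P x :\ x = B -> P :\ pblock P x = Q ->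
  (B \subset A :\ x) && partition Q (A :\: (x |: B)).
Proof.
move=> xA pP <- <-.
have xc : x \in cover P by rewrite (cover_partition pP).
have pbP := pblock_mem xc.
rewrite setD1K ?mem_pblock // partitionD1 // andbT subsetD1 !inE eqxx /= andbT.
apply: subset_trans (partitionS pP pbP); exact: subsetDl.
Qed.

Lemma part_add A x B Q : x \in A -> B \subset A :\ x -> partition Q (A :\: (x |: B)) ->
  [/\ partition ((x |: B) |: Q) A, (x |: B) \notin Q & pblock ((x |: B) |: Q) x = x |: B].
Proof.
move=> xA sB pQ.
have xB : x \notin B by move: sB; rewrite subsetD1 => /andP[].
have sXA : x |: B \subset A.
  rewrite subUset sub1set xA; apply: subset_trans sB _; exact: subsetDl.
have XQ : (x |: B) \notin Q.
  apply/negP => XQ; have := partitionS pQ XQ; move/subsetP => /(_ x).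
  by rewrite !inE eqxx /= => /(_ isT).
have pP : partition ((x |: B) |: Q) A.
  have eqA : (x |: B) :|: (A :\: (x |: B)) = A.
    apply/setP => z; rewrite !inE; move/subsetP: sXA => /(_ z); rewrite !inE.
    by case: (z == x); case: (z \in B); case: (z \in A) => //= h; have := h isT.
  have h1 : x |: B != set0 by apply/set0Pn; exists x; rewrite !inE eqxx.
  have h2 : [disjoint x |: B & A :\: (x |: B)].
    by rewrite disjoints_subset; apply/subsetP => z; rewrite !inE; case: (z == x); case: (z \in B).
  by have := partitionU1 pQ h1 h2; rewrite eqA.
split => //; apply: def_pblock; rewrite ?(partition_trivIset pP) ?setU11 //.
Qed.

Lemma Rdec k A x f : x \in A ->
  Rf k A f = \sum_(B : {set 'I_n} | B \subset A :\ x)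
     cm #|x |: B| * Rf k (A :\: (x |: B)) (fun u => Phi (bsum k (x |: B)) u f).
Proof.
move=> xA.
under [RHS]eq_bigr => B _ do rewrite /Rf mulr_sumr.
rewrite pair_big_dep /=.
rewrite /Rf (reindex_onto (fun p : {set 'I_n} * {set {set 'I_n}} => (x |: p.1) |: p.2)
   (fun P => (pblock P x :\ x, P :\ pblock P x))) /=; last first.
  move=> P pP.
  have xc : x \in cover P by rewrite (cover_partition pP).
  by rewrite setD1K ?mem_pblock // setD1K // pblock_mem.
apply: eq_big => [[B Q]|[B Q]] /=.
  apply/idP/idP.
    by move/andP => [pP /eqP[eB eQ]]; exact: cond_fwd xA pP eB eQ.
  move/andP => [sB pQ]; have [pP XQ pbE] := part_add xA sB pQ.
  have xB : x \notin B by move: sB; rewrite subsetD1 => /andP[].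
  by rewrite pP pbE /= (setU1K xB) (setU1K XQ).
move/andP => [pP /eqP[eB eQ]].
have /andP[sB pQ] := cond_fwd xA pP eB eQ.
have [_ XQ _] := part_add xA sB pQ.
rewrite /cPi big_setU1 //= -mulrA; congr (_ * _).
rewrite (@Gf_perm _ (bsum k (x |: B) :: [seq bsum k B0 | B0 <- enum Q])) //.
by rewrite (perm_map (bsum k) (enum_setU1_perm XQ)).
Qed.
End RSec.


Section DSec.
Variable n : nat.
Implicit Types (k : 'I_n -> nat) (A B D : {set 'I_n}) (f : zword -> Qt).

Lemma setU1D1E (i : 'I_n) B : ((i |: B) :\ i == B) = (i \notin B).
Proof.
apply/eqP/idP => [<-|iB]; first by rewrite !inE eqxx.
by rewrite setU1K.
Qed.

Lemma DC1 D (F : {set 'I_n} -> Qt) :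
  \sum_(i in D) \sum_(B : {set 'I_n} | B \subset D :\ i) F (i |: B) =
  \sum_(B : {set 'I_n} | B \subset D) #|B|%:R * F B.
Proof.
under [RHS]eq_bigr => B _ do rewrite mulr_natl -sumr_const.
rewrite (exchange_big_dep (fun i => i \in D)) /=; last first.
  by move=> B i sBD iB; move/subsetP: sBD; apply.
apply: eq_bigr => i iD.
rewrite [RHS](reindex_onto (fun B => i |: B) (fun B => B :\ i)) /=; last first.
  by move=> B /andP[_ iB]; rewrite setD1K.
apply: eq_bigl => B.
rewrite subUset sub1set iD setU1D1E !inE eqxx /= subsetD1.
by rewrite andbT.
Qed.

Lemma DC2 D (F : {set 'I_n} -> Qt) :
  \sum_(i in D) \sum_(i' in D :\ i) \sum_(B : {set 'I_n} | B \subset D :\ i :\ i') F (i |: (i' |: B)) =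
  \sum_(B : {set 'I_n} | B \subset D) (#|B| * #|B|.-1)%:R * F B.
Proof.
under eq_bigr => i iD do rewrite (DC1 (D :\ i) (fun B => F (i |: B))).
under [RHS]eq_bigr => B _ do rewrite natrM -mulrA.
rewrite -(DC1 D (fun B => #|B|.-1%:R * F B)).
apply: eq_bigr => i iD; apply: eq_bigr => B.
rewrite subsetD1 => /andP[_ iB].
by rewrite cardsU1 iB.
Qed.
End DSec.

Lemma cm_rec m : cm m.+1 = (m == 0%N)%:R - sc * m%:R * cm m - tc * (m * m.-1)%:R * cm m.-1.
Proof.
rewrite /cm /sc /tc.
case: m => [|[|p]]; rewrite /= ?factS ?fact0 ?natrM ?exprS ?expr0 ?mul1n; ring.
Qed.

Section ESec.
Variable n : nat.
Implicit Types (k : 'I_n -> nat) (A B D : {set 'I_n}) (f : zword -> Qt).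

Lemma bsumU1 k i B : i \notin B -> bsum k (i |: B) = (k i + bsum k B)%N.
Proof. by move=> iB; rewrite /bsum big_setU1. Qed.

Lemma bsum_kup k i c B : i \notin B -> bsum (kup k i c) B = bsum k B.
Proof.
move=> iB; apply: eq_bigr => j jB; apply: kup_neq.
by apply: contraNneq iB => <-.
Qed.

Lemma Rf_kup k i c A f : i \notin A -> Rf (kup k i c) A f = Rf k A f.
Proof.
move=> iA; apply: Rf_congr => j jA; apply: kup_neq.
by apply: contraNneq iA => <-.
Qed.

Lemma Rrec k A x f : x \in A ->
  Rf k A f = Rf k (A :\ x) (fun u => Phi (k x) u f)
   - sc * \sum_(i in A :\ x) Rf (kup k i (k x)) (A :\ x) f
   - tc * \sum_(i in A :\ x) \sum_(i' in A :\ x :\ i) Rf (kup k i (k x + k i')) (A :\ x :\ i') f.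
Proof.
move=> xA.
set D := A :\ x.
pose FB B := Rf k (D :\: B) (fun u => Phi (k x + bsum k B) u f).
have Sa : Rf k A f = \sum_(B : {set 'I_n} | B \subset D) cm #|B|.+1 * FB B.
  rewrite (Rdec _ _ xA); apply: eq_bigr => B sB.
  have xB : x \notin B by move: sB; rewrite subsetD1 => /andP[].
  rewrite cardsU1 xB bsumU1 // /FB; congr (_ * Rf _ _ _).
  by rewrite /D; apply/setP => z; rewrite !inE; case: (z == x); case: (z \in B); case: (z \in A).
have Sb : Rf k D (fun u => Phi (k x) u f) =
    \sum_(B : {set 'I_n} | B \subset D) (#|B| == 0%N)%:R * FB B.
  rewrite (bigD1 set0) ?sub0set //= cards0 mul1r big1 ?addr0.
    by rewrite /FB setD0 /bsum big_set0 addn0.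
  by move=> B /andP[_ B0]; rewrite cards_eq0 (negbTE B0) mul0r.
have Sc : \sum_(i in D) Rf (kup k i (k x)) D f =
    \sum_(B : {set 'I_n} | B \subset D) (#|B|%:R * cm #|B|) * FB B.
  transitivity (\sum_(i in D) \sum_(B : {set 'I_n} | B \subset D :\ i) cm #|i |: B| * FB (i |: B)).
    apply: eq_bigr => i iD; rewrite (Rdec _ _ iD); apply: eq_bigr => B sB.
    have iB : i \notin B by move: sB; rewrite subsetD1 => /andP[].
    rewrite Rf_kup; last by rewrite !inE eqxx.
    rewrite bsumU1 // bsum_kup // kup_eq /FB bsumU1 //.
    by rewrite (addnC (k i)) addnA.
  by rewrite (DC1 D (fun B => cm #|B| * FB B)); apply: eq_bigr => B _; rewrite mulrA.
have Sd : \sum_(i in D) \sum_(i' in D :\ i) Rf (kup k i (k x + k i')) (D :\ i') f =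
    \sum_(B : {set 'I_n} | B \subset D) ((#|B| * #|B|.-1)%:R * cm #|B|.-1) * FB B.
  transitivity (\sum_(i in D) \sum_(i' in D :\ i) \sum_(B : {set 'I_n} | B \subset D :\ i :\ i')
      cm #|i |: (i' |: B)|.-1 * FB (i |: (i' |: B))).
    apply: eq_bigr => i iD; apply: eq_bigr => i' i'D.
    have ii' : i' != i by move: i'D; rewrite in_setD1 => /andP[].
    have iD' : i \in D :\ i' by rewrite in_setD1 eq_sym ii' iD.
    rewrite (Rdec _ _ iD') (setD1C D i' i); apply: eq_bigr => B sB.
    have i'B : i' \notin B by move: sB; rewrite subsetD1 => /andP[].
    have iB : i \notin B.
      by move: sB; rewrite subsetD1 => /andP[+ _]; rewrite subsetD1 => /andP[].
    have ii'B : i \notin i' |: B by rewrite !inE negb_or eq_sym ii'.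
    rewrite Rf_kup; last by rewrite !inE eqxx.
    rewrite (cardsU1 i (i' |: B)) ii'B (cardsU1 i' B) i'B cardsU1 iB /=.
    rewrite bsumU1 // bsum_kup // kup_eq /FB bsumU1 // bsumU1 //.
    congr (_ * Rf _ _ _).
      by apply/setP => z; rewrite !inE; case: (z == i); case: (z == i'); case: (z \in B); case: (z \in D).
    by apply: functional_extensionality => u; congr (Phi _ u f); lia.
  by rewrite (DC2 D (fun B => cm #|B|.-1 * FB B)); apply: eq_bigr => B _; rewrite mulrA.
rewrite Sa Sb Sc Sd !mulr_sumr -!sumrB; apply: eq_bigr => B _.
rewrite cm_rec; ring.
Qed.
End ESec.

Lemma LR n : forall m (k : 'I_n -> nat) (A : {set 'I_n}) f, (#|A| <= m)%N -> Lf k A f = Rf k A f.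
Proof.
elim=> [|m IH] k A f cA.
  have -> : A = set0 by apply/eqP; rewrite -cards_eq0 -leqn0.
  by rewrite Lf0 Rf0.
have [->|A0] := eqVneq A set0; first by rewrite Lf0 Rf0.
have [x xA] := set0Pn A A0.
have cAx : (#|A :\ x| <= m)%N by move: cA; rewrite (cardD1S xA).
have E := @Sx n k x _ A f (cardD1S xA) xA.
rewrite (@Rrec n k A x f xA) -IH //.
have -> : \sum_(i in A :\ x) Rf (kup k i (k x)) (A :\ x) f =
          \sum_(i in A :\ x) Lf (kup k i (k x)) (A :\ x) f.
  by apply: eq_bigr => i _; rewrite IH.
have -> : \sum_(i in A :\ x) \sum_(i' in A :\ x :\ i) Rf (kup k i (k x + k i')) (A :\ x :\ i') f =
          \sum_(i in A :\ x) \sum_(i' in A :\ x :\ i) Lf (kup k i (k x + k i')) (A :\ x :\ i') f.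
  apply: eq_bigr => i _; apply: eq_bigr => i' _; rewrite IH //.
  by apply: leq_trans cAx; apply: subset_leq_card; apply: subD1set.
rewrite E; ring.
Qed.


Section FSec.
Variable n : nat.
Variable k : 'I_n -> nat.

Lemma all_D1 (A : {set 'I_n}) y (t : seq 'I_n) :
  all (mem (A :\ y)) t = (y \notin t) && all (mem A) t.
Proof.
elim: t => [|z t IH] //=; rewrite IH !inE negb_or (eq_sym z y).
by case: (y == z); case: (z \in A); case: (y \in t).
Qed.

Lemma LT : forall m (A : {set 'I_n}) f, #|A| = m ->
  Lf k A f = \sum_(t : m.-tuple 'I_n | uniq t && all (mem A) t) f (map k t).
Proof.
elim => [|m IH] A f cA.
  have -> : A = set0 by apply/eqP; rewrite -cards_eq0 cA.
  rewrite Lf0 (big_pred1 [tuple]) // => t.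
  by case: t => [[|//] sP]; apply/esym/eqP; apply: val_inj.
have A0 : A != set0 by rewrite -card_gt0 cA.
rewrite LfE //.
rewrite (reindex (fun p : 'I_n * m.-tuple 'I_n => [tuple of p.1 :: p.2])) /=; last first.
  apply: onW_bij; exists (fun t : m.+1.-tuple 'I_n => (thead t, [tuple of behead t])).
    by move=> [y t] /=; rewrite theadE; congr (_, _); apply: val_inj.
  by move=> t; rewrite [RHS]tuple_eta.
transitivity (\sum_(y in A) \sum_(t : m.-tuple 'I_n | uniq t && all (mem (A :\ y)) t)
    f (k y :: map k t)).
  apply: eq_bigr => y yA; rewrite IH //.
  by move: cA; rewrite (cardD1S yA) => -[].
rewrite pair_big_dep /=; apply: eq_bigl => -[y t] /=.
rewrite all_D1.
by case: (y \in A); case: (y \in t); case: (uniq t); case: (all (mem A) t).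
Qed.
End FSec.

Lemma perm_sum n (k : 'I_n -> nat) (g : zword -> Qt) :
  \sum_(s : {perm 'I_n}) g [seq k (s i) | i <- enum 'I_n] =
  \sum_(t : n.-tuple 'I_n | uniq t && all (mem [set: 'I_n]) t) g (map k t).
Proof.
pose h (s : {perm 'I_n}) : n.-tuple 'I_n := map_tuple s (ord_tuple n).
have hinj : injective h.
  move=> s1 s2 /(congr1 val) /= E; apply/permP => i.
  by move/eq_in_map: E; apply; rewrite mem_enum.
rewrite (eq_bigl (mem (h @: [set: {perm 'I_n}]))); last first.
  move=> t /=; apply/idP/idP.
    case/andP => /tuple_uniqP tu _.
    apply/imsetP; exists (perm tu); rewrite ?inE //.
    apply: val_inj => /=; rewrite -{1}(map_tnth_enum t).
    by apply: eq_map => i; rewrite permE.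
  case/imsetP => s _ ->; rewrite /= map_inj_uniq ?val_ord_tuple ?enum_uniq //; last exact: perm_inj.
  by rewrite /=; apply/allP => i _; apply: in_setT.

rewrite big_imset /=; last by move=> s1 s2 _ _; apply: hinj.
rewrite [RHS](eq_bigl xpredT) => [|s]; last by rewrite inE.
by apply: eq_bigr => s _; rewrite -map_comp.

Qed.

Theorem lemma3p1 (n : nat) (k : 'I_n -> nat) (hk : forall i, (0 < k i)%N) :
  forall w : seq bool, coef (lhs k) w = coef (rhs k) w.
Proof.
move=> w; rewrite !coef_ev.
set g := fun u => _.
have L : ev g (lhs k) = Lf k setT g.
  rewrite /lhs /ev big_map big_enum /=.
  under eq_bigr do rewrite mul1r.
  rewrite (eq_bigl xpredT) => [|s]; last by rewrite inE.
  rewrite perm_sum (@LT n k n setT g) //.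
  by rewrite cardsT card_ord.
have R : ev g (rhs k) = Rf k setT g.
  rewrite /rhs ev_flatten big_map /set_partitions big_enum /Rf.
  apply: eq_big => [P|P _]; first by rewrite inE.
  rewrite ev_scale -ev_tstar_big -map_comp.
  by [].
by rewrite L R (@LR n #|[set: 'I_n]|).
Qed.
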